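(* Let $m\ge3$ be odd and let $s=s(m)$. For every integer $n\ge2$ and every $t\in1+2\mathbb{Z}_2$, one has $$v_2\big(T_m(1+2^nt)-(1+2^nt)\big)=s+n+1.$$
   Context: $v_2$ is the $2$-adic valuation on $\mathbb{Z}_2$. For an integer $m\ge0$, the $m$-th Chebyshev polynomial is $$T_m(x)=\sum_{k=0}^{\lfloor m/2\rfloor}(-1)^k\frac{m}{m-k}\binom{m-k}{k}2^{m-2k-1}x^{m-2k}.$$ For odd $m\ge3$, $s(m)=\max\{n\ge2:\ 2^n\mid(m+1)\text{ or }2^n\mid(m-1)\}$. *)

(* Defs.v *)
From HB Require Import structures.
From mathcomp Require Import all_boot all_order all_algebra.
Set Implicit Arguments. Unset Strict Implicit. Unset Printing Implicit Defensive.
Import Order.TTheory GRing.Theory Num.Theory.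

(* 2-adic valuation of a (nonzero) integer; v2 0 = 0 by convention of logn,
   irrelevant below since the asserted value is positive. *)
Definition v2 (x : int) : nat := logn 2 `|x|%N.

(* Chebyshev polynomial T_m evaluated at an integer x, by the explicit formula
   sum_{k=0}^{floor(m/2)} (-1)^k * m/(m-k) * C(m-k,k) * 2^(m-2k-1) * x^(m-2k).
   (m/(m-k) * C(m-k,k) is an integer, computed as (m * C(m-k,k)) %/ (m-k);
   valid for m >= 1, in particular for odd m >= 3.) *)
Definition chebT (m : nat) (x : int) : int :=
  (\sum_(k < (m./2).+1)
     (-1) ^+ k * ((m * 'C(m - k, k)) %/ (m - k) * 2 ^ (m - 2 * k - 1))%:Z
       * x ^+ (m - 2 * k))%R.

(* s(m) = max { n >= 2 : 2^n | m+1 or 2^n | m-1 }  (such n satisfy n < m+2) *)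
Definition s_of (m : nat) : nat :=
  \max_(n < m.+2 | (1 < n) && ((2 ^ n %| m.+1) || (2 ^ n %| m.-1))) n.

(* 2-adic integers are represented as (classes of) 2-adically Cauchy sequences
   of integers: t k+1 = t k mod 2^k.  The 2-adic integer is lim t k. *)
Definition Z2seq (t : nat -> int) : Prop :=
  forall k : nat, (((2:int) ^+ k)%R %| (t k.+1 - t k)%R)%Z.

Definition in_1_2Z2 (t : nat -> int) : Prop := ((2:int) %| (t 1%N - 1)%R)%Z.

(* Main.v *)
Require Import Defs.
From mathcomp Require Import all_boot all_order all_algebra.
From mathcomp Require Import zify ring.
Import GRing.Theory Num.Theory.

Section Ac.
Local Open Scope nat_scope.

Definition ac (m k : nat) : nat := (m * 'C(m - k, k)) %/ (m - k).

Lemma ac0 m : 0 < m -> ac m 0 = 1.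
Proof. move=> hm; by rewrite /ac subn0 bin0 muln1 divnn hm. Qed.

Lemma ac_big m k : m < k + k -> ac m k = 0.
Proof. move=> h; rewrite /ac bin_small ?muln0 ?div0n //; lia. Qed.

Lemma acform j r : ac (j.+1 + j.+1 + r) j.+1 = 'C(j.+1 + r, j.+1) + 'C(j + r, j).
Proof.
rewrite /ac.
have -> : j.+1 + j.+1 + r - j.+1 = j.+1 + r by lia.
have H : (j.+1 + r) * 'C(j + r, j) = j.+1 * 'C(j.+1 + r, j.+1) by exact: mul_bin_diag.
have -> : (j.+1 + j.+1 + r) * 'C(j.+1 + r, j.+1) =
   (j.+1 + r) * ('C(j.+1 + r, j.+1) + 'C(j + r, j)).
  rewrite mulnDr.
  have -> : (j.+1 + r) * 'C(j + r, j) = j.+1 * 'C(j.+1 + r, j.+1).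
    exact: H.
  lia.
by rewrite mulKn //; lia.
Qed.

Lemma binE a b c d : a = b -> c = d -> 'C(a, c) = 'C(b, d).
Proof. by move=> -> ->. Qed.

Lemma binSn' n k : n = k.+1 -> 'C(n, k) = n.
Proof. by move->; rewrite binSn. Qed.

Lemma acrec m k : 0 < m -> ac m.+2 k.+1 = ac m.+1 k.+1 + ac m k.
Proof.
move=> hm.
case: (leqP (k.+1 + k.+1) m) => hA.
  have [r Hr] : exists r, m = k.+1 + k.+1 + r by exists (m - (k.+1 + k.+1)); lia.
  case: k hA Hr => [|j] hA Hr.
    rewrite ac0 //.
    have -> : m.+2 = 1 + 1 + (r + 2) by lia.
    have -> : m.+1 = 1 + 1 + (r + 1) by lia.
    rewrite !acform !bin0 !bin1; lia.
  have E1 : ac m.+2 j.+2 = 'C(j + r + 4, j + 2) + 'C(j + r + 3, j + 1).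
    have -> : m.+2 = j.+2 + j.+2 + (r + 2) by lia.
    rewrite acform; congr (_ + _); apply: binE; lia.
  have E2 : ac m.+1 j.+2 = 'C(j + r + 3, j + 2) + 'C(j + r + 2, j + 1).
    have -> : m.+1 = j.+2 + j.+2 + (r + 1) by lia.
    rewrite acform; congr (_ + _); apply: binE; lia.
  have E3 : ac m j.+1 = 'C(j + r + 3, j + 1) + 'C(j + r + 2, j).
    have -> : m = j.+1 + j.+1 + (r + 2) by lia.
    rewrite acform; congr (_ + _); apply: binE; lia.
  have P1 : 'C(j + r + 4, j + 2) = 'C(j + r + 3, j + 2) + 'C(j + r + 3, j + 1).
    by rewrite !addnS !addn0; exact: (binS (j + r).+3 j.+1).
  have P2 : 'C(j + r + 3, j + 1) = 'C(j + r + 2, j + 1) + 'C(j + r + 2, j).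
    by rewrite !addnS !addn0; exact: (binS (j + r).+2 j).
  rewrite E1 E2 E3; lia.
case: (ltnP m (k + k)) => hB.
  rewrite (@ac_big m k hB) (@ac_big m.+1 k.+1); last lia.
  rewrite ac_big //; lia.
case: k hA hB => [|j] hA hB.
  have -> : m = 1 by lia.
  by rewrite ac0.
have E3 : ac m j.+1 = 'C(j + (m - (j.+1 + j.+1)).+1, j + 1) + 'C(j + (m - (j.+1 + j.+1)), j).
  have {1}-> : m = j.+1 + j.+1 + (m - (j.+1 + j.+1)) by lia.
  rewrite acform; congr (_ + _); apply: binE; lia.
have E1 : ac m.+2 j.+2 = 'C(j.+2 + (m - (j.+1 + j.+1)), j.+2) + 'C(j.+1 + (m - (j.+1 + j.+1)), j.+1).
  have -> : m.+2 = j.+2 + j.+2 + (m - (j.+1 + j.+1)) by lia.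
  by rewrite acform.
case: (ltnP (j.+2 + j.+2) m.+2) => hC.
  have Hz : m - (j.+1 + j.+1) = 1 by lia.
  rewrite Hz in E1 E3.
  have E2 : ac m.+1 j.+2 = 2.
    have -> : m.+1 = j.+2 + j.+2 + 0 by lia.
    by rewrite acform !addn0 !binn.
  rewrite E1 E2 E3.
  rewrite (@binSn' (j.+2 + 1) j.+2) ?(@binSn' (j.+1 + 1) j.+1) ?(@binSn' (j + 2) (j + 1))
     ?(@binSn' (j + 1) j); lia.
have Hz : m - (j.+1 + j.+1) = 0 by lia.
rewrite Hz in E1 E3.
rewrite E1 E3 (@ac_big m.+1); last lia.
rewrite !addn0 (@binE (j+1) j.+1 (j+1) j.+1) ?binn; lia.
Qed.
End Ac.

Local Open Scope ring_scope.

Fixpoint TV (x : int) (k : nat) : int * int :=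
  match k with
  | 0%N => (1, 0)
  | k'.+1 => let p := TV x k' in (x * p.1 + (x ^+ 2 - 1) * p.2, p.1 + x * p.2)
  end.
Definition Tt x k := (TV x k).1.
Definition Vv x k := (TV x k).2.

Lemma TS x k : Tt x k.+1 = x * Tt x k + (x ^+ 2 - 1) * Vv x k.
Proof. by []. Qed.
Lemma VS x k : Vv x k.+1 = Tt x k + x * Vv x k.
Proof. by []. Qed.
Lemma T0 x : Tt x 0 = 1. Proof. by []. Qed.
Lemma V0 x : Vv x 0 = 0. Proof. by []. Qed.

Lemma TVadd x a b :
  Tt x (a + b) = Tt x a * Tt x b + (x ^+ 2 - 1) * Vv x a * Vv x b /\
  Vv x (a + b) = Tt x a * Vv x b + Vv x a * Tt x b.
Proof.
elim: a => [|c [IT IV]]; first by rewrite add0n T0 V0; split; ring.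
rewrite addSn TS VS TS VS; split; [rewrite IT IV | rewrite IT IV]; ring.
Qed.

Lemma Tnorm x k : Tt x k ^+ 2 - (x ^+ 2 - 1) * Vv x k ^+ 2 = 1.
Proof.
elim: k => [|k IH]; first by rewrite T0 V0; ring.
rewrite TS VS -[RHS]IH; ring.
Qed.

Lemma Trec x k : Tt x k.+2 = 2 * x * Tt x k.+1 - Tt x k.
Proof. rewrite !TS !VS ?TS; ring. Qed.

Lemma Tmain x b : Tt x (b + b).+1 - x = 2 * (x ^+ 2 - 1) * Vv x b.+1 * Vv x b.
Proof.
rewrite -addSn (proj1 (TVadd x b.+1 b)) TS VS.
apply/eqP; rewrite -subr_eq0.
have -> : (x * Tt x b + (x ^+ 2 - 1) * Vv x b) * Tt x b +
  (x ^+ 2 - 1) * (Tt x b + x * Vv x b) * Vv x b - x -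
  2 * (x ^+ 2 - 1) * (Tt x b + x * Vv x b) * Vv x b
  = x * (Tt x b ^+ 2 - (x ^+ 2 - 1) * Vv x b ^+ 2 - 1) by ring.
by rewrite Tnorm subrr mulr0.
Qed.

Lemma Todd a k : exists w, Tt (2 * a + 1) k = 2 * w + 1.
Proof.
elim: k => [|k [w Hw]]; first by exists 0; rewrite T0; ring.
exists (2*a*w + a + w + 2 * a * (a+1) * Vv (2*a+1) k).
rewrite TS Hw; ring.
Qed.

Lemma Vodd a j : exists w, Vv (2 * a + 1) (j + j).+1 = 2 * w + 1.
Proof.
rewrite -addSn (proj2 (TVadd _ j.+1 j)).
have [w1 H1] := Todd a j; have [w2 H2] := Todd a j.+1.
rewrite VS H2 H1.
exists (w1 * (Vv (2 * a + 1) j.+1) + Vv (2 * a + 1) j * w2 + w1 + (a+1) * Vv (2*a+1) j).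
rewrite VS H1; ring.
Qed.

Lemma Vpow a e o : exists w, Vv (2 * a + 1) (2 ^ e * (o + o).+1) = 2 ^+ e * (2 * w + 1).
Proof.
elim: e => [|e [w Hw]]; first by rewrite expn0 mul1n; have [w Hw] := Vodd a o; exists w; rewrite Hw expr0 mul1r.
rewrite expnS -mulnA mul2n -addnn (proj2 (TVadd _ _ _)) Hw.
have [w1 H1] := Todd a (2 ^ e * (o + o).+1).
rewrite H1; exists (2 * w1 * w + w1 + w); rewrite exprS; ring.
Qed.

Definition F (x : int) (m N : nat) : int :=
  \sum_(k < N) (-1) ^+ k * (ac m k)%:Z * 2 ^+ (m - 2 * k) * x ^+ (m - 2 * k).

Lemma Fstab x m N j : (m < N + N)%N -> F x m (N + j) = F x m N.
Proof.
move=> h; elim: j => [|j IH]; first by rewrite addn0.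
rewrite addnS /F big_ord_recr /= -/(F x m (N + j)) IH ac_big; last lia.
by rewrite mulr0 mul0r mul0r addr0.
Qed.

Lemma Frec x m : (0 < m)%N -> F x m.+2 m.+3 = 2 * x * F x m.+1 m.+2 - F x m m.+1.
Proof.
move=> hm.
rewrite -[F x m.+1 m.+2](@Fstab x m.+1 m.+2 1) ?addn1; last lia.
rewrite -[F x m m.+1](@Fstab x m m.+1 1) ?addn1; last lia.
rewrite /F big_ord_recl [X in _ = 2 * x * X - _]big_ord_recl.
rewrite mulrDr mulr_sumr -addrA -sumrB; congr (_ + _).
  rewrite !ac0 // !muln0 !subn0 !expr0 !mul1r !exprS; ring.
apply: eq_bigr => i _.
rewrite lift0.
set k := nat_of_ord i.
rewrite acrec // PoszD.
have -> : (m.+2 - 2 * k.+1 = m - 2 * k)%N by lia.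
case: (leqP (k.+1 + k.+1) m.+1) => hk.
  have -> : (m - 2 * k = (m.+1 - 2 * k.+1).+1)%N by lia.
  rewrite !exprS; ring.
rewrite (@ac_big m.+1 k.+1) // !exprS; ring.
Qed.

Lemma F1 x : F x 1 2 = 2 * Tt x 1.
Proof.
rewrite /F !big_ord_recr big_ord0 /= (@ac_big 1 1) // ac0 //.
rewrite /Tt /=; ring.
Qed.

Lemma F2 x : F x 2 3 = 2 * Tt x 2.
Proof.
rewrite /F !big_ord_recr big_ord0 /= (@ac_big 2 2) // ac0 //.
have -> : ac 2 1 = 2%N by [].
rewrite /Tt /=; ring.
Qed.

Lemma FT x m : (0 < m)%N -> F x m m.+1 = 2 * Tt x m.
Proof.
have H : forall n, F x n.+1 n.+2 = 2 * Tt x n.+1 /\ F x n.+2 n.+3 = 2 * Tt x n.+2.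
  elim=> [|n [IH1 IH2]]; first by split; [exact: F1 | exact: F2].
  split; first exact: IH2. rewrite (@Frec x n.+1) // IH1 IH2 (Trec x n.+1); ring.
by case: m => [//|m] _; case: (H m).
Qed.

Lemma cheb_F x m : odd m -> chebT m x * 2 = F x m m.+1.
Proof.
move=> hodd.
have hm2 : (m < (m./2).+1 + (m./2).+1)%N.
  have := odd_double_half m; rewrite hodd -addnn; lia.
rewrite -(subnKC (_ : (m./2).+1 <= m.+1)%N); last lia.
rewrite Fstab // /chebT /F mulr_suml; apply: eq_bigr => i _.
have hi : (2 * i < m)%N.
  have := ltn_ord i; have := odd_double_half m; rewrite hodd -addnn; lia.
rewrite PoszM -!natz !natrX (_ : (m - 2 * i)%N = (m - 2 * i - 1)%N.+1); last lia.
rewrite subSS subn0 !exprS /ac; ring.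
Qed.

Lemma cheb_T x m : odd m -> chebT m x = Tt x m.
Proof.
move=> hodd; have hm : (0 < m)%N by case: m hodd.
apply: (@mulIf _ 2) => //; rewrite /= cheb_F // FT // mulrC; reflexivity.
Qed.

Lemma v2_pow_odd e w : v2 (2 ^+ e * (2 * w + 1)) = e.
Proof.
rewrite /v2 abszM abszX /=.
have hq : ~~ (2 %| `|(2 * w + 1)%R|)%N.
  apply/negP => h.
  have h' : (2 %| 2 * w + 1)%Z by [].
  have h2 : (2 %| 2 * w)%Z by apply: dvdz_mulr; rewrite dvdzz.
  have : (2 %| (2 * w + 1) - 2 * w)%Z by apply: rpredB.
  by rewrite addrAC subrr add0r.
have q0 : (0 < `|(2 * w + 1)%R|)%N.
  rewrite absz_gt0; apply/eqP => h; move: hq; rewrite h.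
  by rewrite dvdn0.
rewrite lognM ?expn_gt0 // pfactorK //.
by rewrite lognE (negbTE hq) !andbF addn0.
Qed.

Lemma oddM (a b : int) : (2 * a + 1) * (2 * b + 1) = 2 * (2 * a * b + a + b) + 1.
Proof. ring. Qed.

Lemma factor2 b : (0 < b)%N -> exists o, b = (2 ^ logn 2 b * (o + o).+1)%N.
Proof.
move=> hb; have [q hq Hb] := pfactor_coprime (isT : prime 2) hb.
rewrite coprime2n in hq.
exists q./2; rewrite {1}Hb mulnC; congr (_ * _)%N.
have := odd_double_half q; rewrite hq -addnn /=; lia.
Qed.

Lemma s_val b : (0 < b)%N -> s_of (b + b).+1 = (logn 2 b + logn 2 b.+1).+1.
Proof.
move=> hb.
set e1 := logn 2 b; set e2 := logn 2 b.+1.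
have D2 : forall N, (2 ^ N %| (b + b).+2)%N = (N <= e2.+1)%N.
  move=> N; rewrite pfactor_dvdn // (_ : (b + b).+2 = 2 * b.+1)%N; last lia.
  by rewrite lognM // (pfactorK 1).
have D1 : forall N, (2 ^ N %| (b + b))%N = (N <= e1.+1)%N.
  move=> N; have hbb : (0 < b + b)%N by lia.
  rewrite pfactor_dvdn //.
  by rewrite (_ : (b + b) = 2 * b)%N ?lognM ?(pfactorK 1) //; lia.
have Z : e1 = 0%N \/ e2 = 0%N.
  case: (posnP e1) => [|h1]; [by left|right].
  apply/eqP; rewrite -leqn0 leqNgt; apply/negP => h2.
  have a1 : (2 ^ 1 %| b)%N by rewrite pfactor_dvdn.
  have a2 : (2 ^ 1 %| b.+1)%N by rewrite pfactor_dvdn.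
  by move: a2; rewrite -[b.+1]addn1 (dvdn_addr _ a1).
have NZ : (1 <= e1 + e2)%N.
  rewrite leqNgt; apply/negP => h.
  have h1 : ~~ (2 ^ 1 %| b)%N by rewrite pfactor_dvdn // -/e1; lia.
  have h2 : ~~ (2 ^ 1 %| b.+1)%N by rewrite pfactor_dvdn // -/e2; lia.
  by move: h1 h2; rewrite !dvdn2 /= negbK => ->.
have B1 : (e1 < b)%N.
  apply: (leq_trans (ltn_expl e1 (isT : (1 < 2)%N))).
  by apply: dvdn_leq => //; apply: pfactor_dvdnn.
have B2 : (e2 < b.+1)%N.
  apply: (leq_trans (ltn_expl e2 (isT : (1 < 2)%N))).
  by apply: dvdn_leq => //; apply: pfactor_dvdnn.
apply/eqP; rewrite eqn_leq; apply/andP; split.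
  apply/bigmax_leqP => i /andP [_ /orP [H|H]].
    by move: H; rewrite D2; case: Z => ->; lia.
  by move: H; rewrite /= D1; case: Z => ->; lia.
have lt : ((e1 + e2).+1 < (b + b).+1.+2)%N by lia.
apply: (@bigmax_sup _ (Ordinal lt)) => //=.
apply/andP; split; first lia.
by rewrite D1 D2; case: Z => ->; rewrite ?addn0 ?leqnn ?orbT.
Qed.

Lemma key m n' c : odd m -> (3 <= m)%N ->
  v2 (chebT m (1 + 2 ^+ n'.+2 * (2 * c + 1)) - (1 + 2 ^+ n'.+2 * (2 * c + 1)))
  = (s_of m + n'.+2 + 1)%N.
Proof.
move=> hodd hm3.
have hm : m = (m./2 + m./2).+1.
  have := odd_double_half m; rewrite hodd -addnn /=; lia.
set b := m./2 in hm.
have hb : (0 < b)%N by lia.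
rewrite cheb_T // hm Tmain s_val //.
have hx : 1 + 2 ^+ n'.+2 * (2 * c + 1) = 2 * (2 ^+ n'.+1 * (2 * c + 1)) + 1.
  by rewrite exprS; ring.
rewrite hx.
set a := 2 ^+ n'.+1 * (2 * c + 1).
have [o1 Ho1] := @factor2 b hb.
have [o2 Ho2] := @factor2 b.+1 (ltn0Sn b).
have [w1 Hw1] := Vpow a (logn 2 b) o1; rewrite -Ho1 in Hw1.
have [w2 Hw2] := Vpow a (logn 2 b.+1) o2; rewrite -Ho2 in Hw2.
rewrite Hw1 Hw2.
set e1 := logn 2 b; set e2 := logn 2 b.+1.
have E : 2 * ((2 * a + 1) ^+ 2 - 1) * (2 ^+ e2 * (2 * w2 + 1)) * (2 ^+ e1 * (2 * w1 + 1))
  = 2 ^+ (e1 + e2 + n'.+4) * ((2 * c + 1) * (2 * (2 ^+ n' * (2 * c + 1)) + 1)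
      * (2 * w2 + 1) * (2 * w1 + 1)).
  by rewrite /a !exprD !exprS; ring.
rewrite E !oddM v2_pow_odd; lia.
Qed.

Lemma t_odd t : Z2seq t -> in_1_2Z2 t -> forall k, exists c, t k.+1 = 2 * c + 1.
Proof.
move=> ht ht1.
have H : forall k, (2 %| t k.+1 - 1)%Z.
  elim=> [//|k IH].
  have h1 : (2 %| t k.+2 - t k.+1)%Z.
    by have := ht k.+1; rewrite exprS; apply: dvdz_trans; apply: dvdz_mulr; rewrite dvdzz.
  have -> : t k.+2 - 1 = (t k.+2 - t k.+1) + (t k.+1 - 1) by ring.
  exact: rpredD.
move=> k; have /dvdzP [q Hq] := H k.
by exists q; rewrite -[t k.+1](subrK 1) Hq; ring.
Qed.

Local Close Scope ring_scope.

Theorem mainTheorem6 (m : nat) (hm3 : 3 <= m) (hodd : odd m)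
  (n : nat) (hn : 2 <= n) (t : nat -> int) (ht : Z2seq t) (ht1 : in_1_2Z2 t) :
  exists K : nat, forall k : nat, K <= k ->
    v2 (chebT m (1 + 2 ^+ n * t k) - (1 + 2 ^+ n * t k))%R = s_of m + n + 1.
Proof.
exists 1%N => k hk.
case: k hk => [//|k] _.
have [c Hc] := @t_odd t ht ht1 k.
case: n hn => [//|[//|n']] _.
by rewrite Hc key.
Qed.
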